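(* For conjunctive guarded systems of type $(A,B)$: for all $n\ge1$, if $(A,B)^{(1,n)}$ has a deadlock then $(A,B)^{(1,n+1)}$ has a deadlock.
   Context: A process template is $U=(Q_U,\mathit{init}_U,\Sigma_U,\delta_U)$ with finite states $Q_U$, initial state $\mathit{init}_U$, finite input alphabet $\Sigma_U$ and guarded transitions $\delta_U\subseteq Q_U\times\Sigma_U\times 2^{Q_A\cup Q_B}\times Q_U$; templates $A,B$ have disjoint state sets and disjoint alphabets. The system $(A,B)^{(1,n)}$ consists of one copy of $A$ and $n$ copies $B_1,\dots,B_n$ of $B$; a global state $s$ gives each process a local state, a global input $e$ gives each process an input letter, and initially all processes are in their initial states. In a conjunctive system a guard $g$ is satisfied for process $p$ in $s$ iff every process $p'\ne p$ has $s(p')\in g$, and $\mathit{init}_A,\mathit{init}_B$ belong to every guard. A local transition $(q,\sigma,g,q')$ of $p$ is enabled for $(s,e)$ if $s(p)=q$, $e(p)=\sigma$ and $g$ is satisfied for $p$ in $s$; a process is enabled if one of its transitions is; a global step changes the state of exactly one process along an enabled transition. A path is a sequence of configurations $(s_1,e_1,p_1),(s_2,e_2,p_2),\dots$ where $p_t$ makes the step from $s_t$ to $s_{t+1}$ under $e_t$, a configuration $(s,e,\bot)$ occurs (as the last one) exactly when all processes are disabled, and $e_{t+1}(p)=e_t(p)$ for every process $p$ not moving at moment $t$. A run is a maximal path from the initial state. A run is globally deadlocked if it is finite; an infinite run is locally deadlocked if some process is disabled at all moments from some moment on; a system has a deadlock if it has a globally or locally deadlocked run. *)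

(* Defs.v *)
From mathcomp Require Import all_boot.
Set Implicit Arguments. Unset Strict Implicit. Unset Printing Implicit Defensive.

Section Conj.
(* State sets Q_A, Q_B (disjoint: combined as the sum QA + QB),
   alphabets S_A, S_B, initial states, guarded transition relations. *)
Variables (QA QB SA SB : finType).
Variables (initA : QA) (initB : QB).
Variable deltaA : {set QA * SA * {set QA + QB} * QA}.
Variable deltaB : {set QB * SB * {set QA + QB} * QB}.

Definition init_in_guards : Prop :=
  (forall q a g q', (q, a, g, q') \in deltaA -> inl initA \in g /\ inr initB \in g) /\
  (forall q b g q', (q, b, g, q') \in deltaB -> inl initA \in g /\ inr initB \in g).

Variable n : nat.

(* Processes: None = the copy of A, Some i = B_(i+1). *)
Definition proc := option 'I_n.

Record gstate := GState { stA : QA; stB : 'I_n -> QB }.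
Record ginput := GInput { inA : SA; inB : 'I_n -> SB }.

Definition init_state : gstate := GState initA (fun _ => initB).

Definition loc (s : gstate) (p : proc) : QA + QB :=
  match p with None => inl (stA s) | Some i => inr (stB s i) end.

Definition guard_sat (g : {set QA + QB}) (p : proc) (s : gstate) : Prop :=
  forall p', p' <> p -> loc s p' \in g.

Definition enabled_tr (s : gstate) (e : ginput) (p : proc) (g : {set QA + QB})
    (q' : QA + QB) : Prop :=
  match p with
  | None => exists qa', q' = inl qa' /\
            (stA s, inA e, g, qa') \in deltaA /\ guard_sat g None s
  | Some i => exists qb', q' = inr qb' /\
            (stB s i, inB e i, g, qb') \in deltaB /\ guard_sat g (Some i) s
  end.

Definition proc_enabled (s : gstate) (e : ginput) (p : proc) : Prop :=
  exists g q', enabled_tr s e p g q'.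

Definition all_disabled (s : gstate) (e : ginput) : Prop :=
  forall p, ~ proc_enabled s e p.

Definition gstep (s : gstate) (e : ginput) (p : proc) (s' : gstate) : Prop :=
  (exists g, enabled_tr s e p g (loc s' p)) /\
  (forall p', p' <> p -> loc s' p' = loc s p').

Definition inp (e : ginput) (p : proc) : SA + SB :=
  match p with None => inl (inA e) | Some i => inr (inB e i) end.

(* configuration (s, e, p) with p = None standing for ⊥ *)
Definition config := (gstate * ginput * option proc)%type.

(* A run is encoded as r : nat -> config; if some configuration has ⊥,
   the run is finite and ends at the first such configuration (later entries
   are irrelevant and unconstrained).  Maximality is automatic: ⊥ occurs
   exactly when all processes are disabled. *)
Definition is_run (r : nat -> config) : Prop :=
  (r 0).1.1 = init_state /\
  forall t, (forall t', t' < t -> (r t').2 <> None) ->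
    ((r t).2 = None <-> all_disabled (r t).1.1 (r t).1.2) /\
    (forall p, (r t).2 = Some p ->
       gstep (r t).1.1 (r t).1.2 p (r t.+1).1.1 /\
       (forall p', p' <> p -> inp (r t.+1).1.2 p' = inp (r t).1.2 p')).

Definition globally_deadlocked (r : nat -> config) : Prop :=
  exists t, (r t).2 = None.

Definition locally_deadlocked (r : nat -> config) : Prop :=
  (forall t, (r t).2 <> None) /\
  exists p t0, forall t, t0 <= t -> ~ proc_enabled (r t).1.1 (r t).1.2 p.

Definition has_deadlock : Prop :=
  exists r, is_run r /\ (globally_deadlocked r \/ locally_deadlocked r).

End Conj.

(* Main.v *)
Require Import Defs.
From mathcomp Require Import all_boot.
From Stdlib Require Import ClassicalEpsilon FunctionalExtensionality Classical.

Set Implicit Arguments. Unset Strict Implicit. Unset Printing Implicit Defensive.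

Section Mono.
Variables (QA QB SA SB : finType) (initA : QA) (initB : QB).
Variable deltaA : {set QA * SA * {set QA + QB} * QA}.
Variable deltaB : {set QB * SB * {set QA + QB} * QB}.
Hypothesis Hinit : init_in_guards initA initB deltaA deltaB.
Variable n : nat.
Variable sig : SB.

Definition newp : proc n.+1 := Some ord_max.
Definition liftp (p : proc n) : proc n.+1 := omap (lift ord_max) p.

Definition lift_s (s : gstate QA QB n) (q : QB) : gstate QA QB n.+1 :=
  GState (stA s) (fun i => if unlift ord_max i is Some j then stB s j else q).
Definition lift_e (e : ginput SA SB n) (a : SB) : ginput SA SB n.+1 :=
  GInput (inA e) (fun i => if unlift ord_max i is Some j then inB e j else a).

Lemma proc_cases (p : proc n.+1) : p = newp \/ exists p0, p = liftp p0.
Proof.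
case: p => [i|]; last by right; exists None.
case: (unliftP ord_max i) => [j ->|->]; last by left.
by right; exists (Some j).
Qed.

Lemma liftp_inj : injective liftp.
Proof. move=> [i|] [j|] //= H; congr Some; apply: (@lift_inj _ ord_max); apply: val_inj; by case: H. Qed.

Lemma liftp_new p : liftp p <> newp.
Proof.
case: p => [i|] //= H; have := neq_lift (@ord_max n) i; rewrite eq_sym; move/eqP; apply; apply: val_inj; by case: H.
Qed.

Lemma loc_lift s q p : loc (lift_s s q) (liftp p) = loc s p.
Proof. by case: p => [i|] //=; rewrite liftK. Qed.

Lemma loc_lift_new s q : loc (lift_s s q) newp = inr q.
Proof. by rewrite /= unlift_none. Qed.

Lemma inp_lift e a p : inp (lift_e e a) (liftp p) = inp e p.
Proof. by case: p => [i|] //=; rewrite liftK. Qed.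

Lemma inp_lift_new e a : inp (lift_e e a) newp = inr a.
Proof. by rewrite /= unlift_none. Qed.

Definition agree (S : gstate QA QB n.+1) (s : gstate QA QB n) :=
  forall p, loc S (liftp p) = loc s p.
Definition agree_e (E : ginput SA SB n.+1) (e : ginput SA SB n) :=
  forall p, inp E (liftp p) = inp e p.

Lemma enabled_down S E s e p : agree S s -> agree_e E e ->
  proc_enabled deltaA deltaB S E (liftp p) -> proc_enabled deltaA deltaB s e p.
Proof.
move=> HS HE [g [q' H]]; exists g, q'.
have Hg' : guard_sat g (liftp p) S -> guard_sat g p s.
  move=> Hg p' Hp'; rewrite -HS; apply: Hg => C; apply: Hp'; exact: liftp_inj C.
case: p H Hg' => [i|] /= [qq [-> [Hd Hg]]] Hg'; exists qq; split=> //.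
  have := HS (Some i); have := HE (Some i); move=> /= [<-] [<-].
  by split => //; apply: Hg'.
have := HS None; have := HE None; move=> /= [<-] [<-].
by split => //; apply: Hg'.
Qed.

Lemma guard_up g p s : guard_sat g p s -> inr initB \in g ->
  guard_sat g (liftp p) (lift_s s initB).
Proof.
move=> H Hi p'' Hne; case: (proc_cases p'') Hne => [->|[p0 ->]] Hne.
  by rewrite loc_lift_new.
rewrite loc_lift; apply: H => C; apply: Hne; exact: (congr1 liftp C).
Qed.

Lemma tr_up s e p g q' : enabled_tr deltaA deltaB s e p g q' ->
  enabled_tr deltaA deltaB (lift_s s initB) (lift_e e sig) (liftp p) g q'.
Proof.
case: Hinit => HA HB.
case: p => [i|] /= [qq [-> [Hd Hg]]]; exists qq; split => //.
  rewrite liftK; split => //; apply: (guard_up (p := Some i)) => //.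
  by case: (HB _ _ _ _ Hd).
split => //; apply: (guard_up (p := None)) => //.
by case: (HA _ _ _ _ Hd).
Qed.

Lemma enabled_up s e p : proc_enabled deltaA deltaB s e p ->
  proc_enabled deltaA deltaB (lift_s s initB) (lift_e e sig) (liftp p).
Proof. move=> [g [q' H]]; exists g, q'; exact: tr_up. Qed.

Lemma step_up s e p s' : gstep deltaA deltaB s e p s' ->
  gstep deltaA deltaB (lift_s s initB) (lift_e e sig) (liftp p) (lift_s s' initB).
Proof.
move=> [[g Hg] Hf]; split.
  exists g; rewrite loc_lift; exact: tr_up.
move=> p'' Hne; case: (proc_cases p'') Hne => [->|[p0 ->]] Hne.
  by rewrite !loc_lift_new.
rewrite !loc_lift; apply: Hf => C; apply: Hne; exact: (congr1 liftp C).
Qed.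

Lemma inp_up e e' p : (forall p', p' <> p -> inp e' p' = inp e p') ->
  forall p'', p'' <> liftp p -> inp (lift_e e' sig) p'' = inp (lift_e e sig) p''.
Proof.
move=> Hf p'' Hne; case: (proc_cases p'') Hne => [->|[p0 ->]] Hne.
  by rewrite !inp_lift_new.
rewrite !inp_lift; apply: Hf => C; apply: Hne; exact: (congr1 liftp C).
Qed.

Lemma lift_init : lift_s (init_state initA initB n) initB = init_state initA initB n.+1.
Proof.
rewrite /lift_s /init_state /=; f_equal; apply: functional_extensionality => i.
by case: (unlift _ _).
Qed.

Definition liftc (c : config QA QB SA SB n) : config QA QB SA SB n.+1 :=
  (lift_s c.1.1 initB, lift_e c.1.2 sig, omap liftp c.2).

Lemma prefix_step r (r' : nat -> config QA QB SA SB n.+1) t :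
  is_run initA initB deltaA deltaB r ->
  (forall t', t' <= t -> (r t').2 <> None) ->
  r' t = liftc (r t) -> (r' t.+1).1 = (liftc (r t.+1)).1 ->
  ((r' t).2 = None <-> all_disabled deltaA deltaB (r' t).1.1 (r' t).1.2) /\
  (forall p, (r' t).2 = Some p ->
     gstep deltaA deltaB (r' t).1.1 (r' t).1.2 p (r' t.+1).1.1 /\
     (forall p', p' <> p -> inp (r' t.+1).1.2 p' = inp (r' t).1.2 p')).
Proof.
move=> [H0 Hr] Hne -> ->.
have [Hd Hs] := Hr t (fun t' lt => Hne t' (ltnW lt)).
case E: (r t).2 => [p|]; last by have := Hne t (leqnn t); rewrite E.
have [Hg Hi] := Hs p E.
rewrite /liftc E /=; split.
  split => // Hall; exfalso; apply: (Hall (liftp p)); apply: enabled_up.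
  by case: Hg => [[g Htr] _]; exists g, (loc (r t.+1).1.1 p).
move=> p0 [<-]; split; [exact: step_up | exact: inp_up].
Qed.

Section Cont.
Variables (s0 : gstate QA QB n) (e0 : ginput SA SB n).

Definition EE := lift_e e0 sig.
Definition upd (S : gstate QA QB n.+1) (q : QB) : gstate QA QB n.+1 :=
  GState (stA S) (fun i => if i == ord_max then q else stB S i).
Definition nextB (S : gstate QA QB n.+1) : QB :=
  epsilon (inhabits initB) (fun qb => exists g,
    (stB S ord_max, inB EE ord_max, g, qb) \in deltaB /\ guard_sat g newp S).
Fixpoint cS (k : nat) : gstate QA QB n.+1 :=
  if k is k'.+1 then upd (cS k') (nextB (cS k')) else lift_s s0 initB.
Definition lab (k : nat) : option (proc n.+1) :=
  if excluded_middle_informative (proc_enabled deltaA deltaB (cS k) EE newp)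
  then Some newp else None.

Lemma agree_cS k : agree (cS k) s0.
Proof.
elim: k => [|k IH] p /=; first exact: loc_lift.
rewrite -IH; case: p => [i|] //=.
case: eqP => // H; exfalso; apply: (@liftp_new (Some i)); by rewrite /= H.
Qed.

Lemma agree_EE : agree_e EE e0.
Proof. move=> p; exact: inp_lift. Qed.

Hypothesis Hdead : all_disabled deltaA deltaB s0 e0.

Lemma old_dis k p : ~ proc_enabled deltaA deltaB (cS k) EE (liftp p).
Proof.
move=> H; exact: (Hdead (enabled_down (agree_cS k) agree_EE H)).
Qed.

Lemma cont_step k :
  (lab k = None <-> all_disabled deltaA deltaB (cS k) EE) /\
  (forall p, lab k = Some p ->
     gstep deltaA deltaB (cS k) EE p (cS k.+1) /\
     (forall p', p' <> p -> inp EE p' = inp EE p')).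
Proof.
rewrite /lab; case: excluded_middle_informative => H.
  split; first by split => // Hall; exfalso; exact: Hall _ H.
  move=> p [<-]; split => //.
  have Hex : exists qb, exists g,
    (stB (cS k) ord_max, inB EE ord_max, g, qb) \in deltaB /\ guard_sat g newp (cS k).
    case: H => [g [q' [qq [_ [Hd Hg]]]]]; by exists qq, g.
  have [g [Hd Hg]] := epsilon_spec (inhabits initB) _ Hex.
  split.
    exists g; exists (nextB (cS k)); rewrite /= eqxx; split => //.
  case=> [i|] Hne //=.
  case: eqP => // Hi; exfalso; apply: Hne; by rewrite Hi.
split; last by [].
split => // _ p''; case: (proc_cases p'') => [->|[p0 ->]] //.
exact: old_dis.
Qed.

End Cont.
End Mono.

Theorem mainTheorem14 (QA QB SA SB : finType) (initA : QA) (initB : QB)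
    (deltaA : {set QA * SA * {set QA + QB} * QA})
    (deltaB : {set QB * SB * {set QA + QB} * QB}) :
  init_in_guards initA initB deltaA deltaB ->
  forall n : nat, 1 <= n ->
    has_deadlock initA initB deltaA deltaB n ->
    has_deadlock initA initB deltaA deltaB n.+1.
Proof.
move=> Hinit n Hn [r [Hr Hdl]].
pose sig := inB (r 0).1.2 (Ordinal Hn).
case: Hdl => [[T0 HT0]|[Hall [p [t0 Hp]]]].
- have exT : exists t, (r t).2 == None by exists T0; rewrite HT0.
  case: (ex_minnP exT) => T /eqP HT Hmin.
  have Hmin' : forall t, t < T -> (r t).2 <> None.
    move=> t Ht E; have := Hmin t; rewrite E eqxx => /(_ isT); by rewrite leqNgt Ht.
  have Hdead : all_disabled deltaA deltaB (r T).1.1 (r T).1.2.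
    have [_ Hrr] := Hr; have [Hd _] := Hrr T Hmin'; by apply/Hd.
  pose s0 := (r T).1.1; pose e0 := (r T).1.2.
  pose r' := fun t => if t < T then liftc initB sig (r t)
    else (cS initB deltaB sig s0 e0 (t - T), EE sig e0, lab initB deltaA deltaB sig s0 e0 (t - T)).
  have Hlate : forall t, T <= t -> r' t =
     (cS initB deltaB sig s0 e0 (t - T), EE sig e0, lab initB deltaA deltaB sig s0 e0 (t - T)).
    by move=> t Ht; rewrite /r' ltnNge Ht.
  exists r'; split.
    split.
      case: (ltnP 0 T) => H0.
        rewrite /r' H0 /= (proj1 Hr); exact: lift_init.
      have ET : T = 0 by move: H0; rewrite leqn0 => /eqP.
      rewrite Hlate // /= /s0 ET (proj1 Hr); exact: lift_init.
    move=> t Hprev; case: (ltnP t T) => Ht.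
      apply: (prefix_step Hinit Hr).
      + move=> t' Ht'; apply: Hmin'; exact: leq_ltn_trans Ht' Ht.
      + by rewrite /r' Ht.
      case: (ltnP t.+1 T) => H'; first by rewrite /r' H'.
      have ET : T = t.+1 by apply/eqP; rewrite eqn_leq H' Ht.
      by rewrite Hlate // ET subnn /= /s0 /e0 ET.
    rewrite (Hlate t Ht) (Hlate t.+1 (leqW Ht)) (subSn Ht) /=.
    exact: (cont_step initB sig Hdead).
  case: (classic (exists k, ~ proc_enabled deltaA deltaB (cS initB deltaB sig s0 e0 k) (EE sig e0) (Some ord_max))) => Hex.
    left; case: Hex => k Hk; exists (T + k).
    rewrite Hlate ?leq_addr // addKn /= /lab.
    by case: excluded_middle_informative.
  right; split.
    move=> t; case: (ltnP t T) => Ht.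
      rewrite /r' Ht /=; case E: (r t).2 => //; by have := Hmin' t Ht; rewrite E.
    rewrite Hlate //= /lab; case: excluded_middle_informative => // H.
    exfalso; apply: Hex; by exists (t - T).
  exists None, T => t Ht; rewrite Hlate //=.
  exact: (@old_dis _ _ _ _ initB deltaA deltaB n sig s0 e0 Hdead (t - T) None).
- pose r' := fun t => liftc initB sig (r t).
  exists r'; split.
    split; first by rewrite /r' /= (proj1 Hr); exact: lift_init.
    move=> t _; apply: (prefix_step Hinit Hr) => //.
  right; split.
    move=> t; rewrite /r' /=; case E: (r t).2 => //; by have := Hall t; rewrite E.
  exists (liftp p), t0 => t Ht Hen; apply: (Hp t Ht).
  apply: (enabled_down _ _ Hen).
    move=> q; exact: loc_lift.
  move=> q; exact: inp_lift.
Qed.
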